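(* Let $d \ge 1$ and $\rho \ge 0$ be integers and let $r^{(1)}, \dots, r^{(\rho)} \in (0,1)^d$ be pairwise incomparable points such that for each $j \in [d]$ the $\rho$ values $r^{(i)}_j$, $i \in [\rho]$, are distinct. Let $S$ be the record-setting region and $I$ the set of interior generators of these points. A point $g \in [0,1)^d$ belongs to $I$ if and only if (i) $g \in S$, and (ii) there exist $d$ distinct indices $i_1, \dots, i_d \in [\rho]$ such that $$g_j = r^{(i_j)}_j = \min\{ r^{(i_\ell)}_j : \ell \in [d]\} \quad \text{for every } j \in [d].$$
   Context: Notation: $[n] = \{1,\dots,n\}$. For $x,y \in \mathbb{R}^d$, $x \prec y$ means $x_j < y_j$ for all $j \in [d]$; $x \le y$ means $x_j \le y_j$ for all $j$; $x < y$ means $x \le y$ and $x \ne y$. Two points are incomparable if neither is $\le$ the other. Given points $r^{(1)},\dots,r^{(\rho)}$ (the ''current records''), the record-setting region is $S := \{x \in [0,1)^d : x \not\prec r^{(i)} \text{ for all } i \in [\rho]\}$. The generators of $S$ are the minimal elements of $S$ with respect to the partial order $\le$; the set of generators is denoted $G$. A point $x \in [0,1)^d$ is interior if all its coordinates are nonzero, and $I := \{g \in G : g \text{ interior}\}$ is the set of interior generators. *)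

(* Defs.v *)
(* Points of R^d are functions 'I_d -> R over an arbitrary
   real (ordered) field R; the statement is purely order-theoretic. *)
From HB Require Import structures.
From mathcomp Require Import all_boot all_order all_algebra.
Set Implicit Arguments. Unset Strict Implicit. Unset Printing Implicit Defensive.
Import Order.TTheory GRing.Theory Num.Theory.
Local Open Scope ring_scope.

Section Defs.
Variables (R : realFieldType) (d rho : nat).

Definition slt (x y : 'I_d -> R) : Prop := forall j, x j < y j.
Definition cle (x y : 'I_d -> R) : Prop := forall j, x j <= y j.
Definition in_cube (x : 'I_d -> R) : Prop := forall j, 0 <= x j /\ x j < 1.
Definition in_open_cube (x : 'I_d -> R) : Prop := forall j, 0 < x j /\ x j < 1.

Definition record_region (r : 'I_rho -> 'I_d -> R) (x : 'I_d -> R) : Prop :=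
  in_cube x /\ forall i, ~ slt x (r i).

Definition generator (r : 'I_rho -> 'I_d -> R) (g : 'I_d -> R) : Prop :=
  record_region r g /\
  ~ (exists y, record_region r y /\ cle y g /\ exists j, y j != g j).

Definition interior (x : 'I_d -> R) : Prop := forall j, x j != 0.

Definition interior_generator (r : 'I_rho -> 'I_d -> R) (g : 'I_d -> R) : Prop :=
  generator r g /\ interior g.

End Defs.

(* Main.v *)
Require Import Defs.
From HB Require Import structures.
From mathcomp Require Import all_boot all_order all_algebra.
Set Implicit Arguments. Unset Strict Implicit. Unset Printing Implicit Defensive.
Import Order.TTheory GRing.Theory Num.Theory.
Local Open Scope ring_scope.

Lemma seqmax (R : realFieldType) (I : eqType) (s : seq I) (P : pred I)
  (F : I -> R) (x0 : R) :
  exists m, x0 <= m /\ (forall i, i \in s -> P i -> F i <= m) /\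
    (m = x0 \/ exists i, P i /\ m = F i).
Proof.
elim: s => [|a s [m [h0 [h1 h2]]]].
  by exists x0; split => //; split; [move=> i; rewrite in_nil | left].
case Pa: (P a); last first.
  exists m; split => //; split => // i; rewrite in_cons => /orP [/eqP -> | his] Pi.
    by rewrite Pa in Pi.
  exact: h1.
case: (leP (F a) m) => hle.
  exists m; split => //; split => // i; rewrite in_cons => /orP [/eqP -> | his] Pi //.
  exact: h1.
exists (F a); split; first exact: le_trans (ltW hle).
split; last by right; exists a.
move=> i; rewrite in_cons => /orP [/eqP -> | his] Pi //.
exact: le_trans (h1 i his Pi) (ltW hle).
Qed.

Theorem theoremT (R : realFieldType) (d rho : nat) (hd : (1 <= d)%N)
  (r : 'I_rho -> 'I_d -> R)
  (hr : forall i, in_open_cube (r i))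
  (hinc : forall i i', i != i' -> ~ cle (r i) (r i'))
  (hdist : forall j, injective (fun i => r i j))
  (g : 'I_d -> R) (hg : in_cube g) :
  interior_generator r g <->
  (record_region r g /\
   exists idx : 'I_d -> 'I_rho, injective idx /\
     forall j, g j = r (idx j) j /\ forall l, r (idx j) j <= r (idx l) j).
Proof.
split.
- move=> [[hS hmin] hint]; split => //.
  pose A k := [pred i | [forall j, (j != k) ==> (g j < r i j)]].
  have key : forall k, exists i, A k i && (r i k == g k).
    move=> k.
    case: (boolP [exists i, A k i && (r i k == g k)]) => [/existsP // | hno].
    exfalso.
    have [m [m0 [mub mcase]]] := seqmax (enum 'I_rho) (A k) (fun i => r i k) 0.
    have hlt : forall i, A k i -> r i k < g k.
      move=> i Ai; rewrite lt_neqAle.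
      have -> : (r i k != g k).
        apply/negP => e; move/negP: hno; apply; apply/existsP; exists i.
        by rewrite Ai e.
      rewrite /=; case: (leP (r i k) (g k)) => // hgt.
      exfalso; apply: (hS.2 i) => j.
      case: (eqVneq j k) => [-> //|njk].
      by move/forallP: Ai => /(_ j); rewrite njk.
    have mlt : m < g k.
      case: mcase => [-> | [i [Ai ->]]]; last exact: hlt.
      by rewrite lt_neqAle (hg k).1 andbT eq_sym; apply: hint.
    apply: hmin.
    exists (fun j => if j == k then m else g j).
    split; last split.
    + split.
      * move=> j; case: (eqVneq j k) => [_|_]; last exact: hg.
        by split => //; exact: lt_trans mlt (hg k).2.
      * move=> i hy.
        have Ai : A k i.
          apply/forallP => j; apply/implyP => njk.
          by have := hy j; rewrite (negbTE njk).
        have := hy k; rewrite eqxx => hmi.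
        have := mub i (mem_enum _ i) Ai.
        by rewrite leNgt hmi.
    + move=> j; case: (eqVneq j k) => [->|_] //; exact: ltW.
    + by exists k; rewrite eqxx lt_eqF.
  have idxP : forall k, { i | A k i && (r i k == g k) }.
    move=> k; apply: sigW; exact: key.
  pose idx k := sval (idxP k).
  have hA : forall k, A k (idx k) by move=> k; case/andP: (svalP (idxP k)).
  have hE : forall k, r (idx k) k = g k
    by move=> k; case/andP: (svalP (idxP k)) => _ /eqP.
  have hlt : forall j l, j != l -> g j < r (idx l) j.
    by move=> j l njl; move/forallP: (hA l) => /(_ j) /implyP; apply.
  exists idx; split.
    move=> j l e; apply/eqP; apply/negPn/negP => njl.
    by have := hlt j l njl; rewrite -e hE ltxx.
  move=> j; split; first by rewrite hE.
  move=> l; case: (eqVneq j l) => [->//|njl].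
  by rewrite hE; apply: ltW; apply: hlt.
- move=> [hS [idx [hinj hidx]]].
  have hlt : forall j l, j != l -> g j < r (idx l) j.
    move=> j l njl; have [e hle] := hidx j.
    rewrite e lt_neqAle hle andbT.
    apply/negP => /eqP h; move/hdist: h => h.
    by move/hinj: h => h; rewrite h eqxx in njl.
  split; last first.
    move=> j; have [e _] := hidx j; rewrite e.
    by have := (hr (idx j) j).1; rewrite lt0r => /andP [].
  split => //.
  move=> [y [hy [hyg [k hk]]]].
  apply: (hy.2 (idx k)) => j.
  case: (eqVneq j k) => [->|njk].
    have [e _] := hidx k; rewrite -e lt_neqAle hk; exact: hyg.
  exact: le_lt_trans (hyg j) (hlt j k njk).
Qed.
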